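(* Let $\Gamma=(V,E)$ be a locally finite reflexive graph with $V\neq\emptyset$, and let $k$ be a nonnegative integer with $k\le\kappa_1(\Gamma)$. Let $X$ be a finite subset of $V$ with $\min(|V\setminus X|,|X|)\ge k$. Then there exist pairwise distinct $x_1,\dots,x_k\in X$ and pairwise distinct $y_1,\dots,y_k\in V\setminus X$ such that $(x_i,y_i)\in E$ for all $1\le i\le k$.
   Context: A graph is a pair $\Gamma=(V,E)$ with $E\subseteq V\times V$; reflexive means $(x,x)\in E$ for all $x$; locally finite means each $\Gamma(x)=\{y:(x,y)\in E\}$ is finite. $\Gamma(A)=\bigcup_{x\in A}\Gamma(x)$, $\partial(A)=\Gamma(A)\setminus A$. If there is a finite nonempty $X$ with $\Gamma(X)\neq V$, then $\kappa_1(\Gamma)=\min\{|\partial(X)|: X \text{ finite nonempty}, \Gamma(X)\ne V\}$; otherwise ($V$ finite) $\kappa_1(\Gamma)=|V|-1$ by convention. *)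

(* Defs.v *)
From Stdlib Require Export List Arith.
Export ListNotations.

Definition finite {V : Type} (A : V -> Prop) : Prop :=
  exists l : list V, forall x, A x -> In x l.

Definition has_card {V : Type} (A : V -> Prop) (n : nat) : Prop :=
  exists l : list V, NoDup l /\ length l = n /\ forall x, A x <-> In x l.

(* |A| >= k  (meaningful also for infinite A) *)
Definition card_ge {V : Type} (A : V -> Prop) (k : nat) : Prop :=
  exists l : list V, NoDup l /\ length l = k /\ forall x, In x l -> A x.

Definition reflexive_graph {V : Type} (E : V -> V -> Prop) : Prop :=
  forall x, E x x.

Definition locally_finite {V : Type} (E : V -> V -> Prop) : Prop :=
  forall x, finite (fun y => E x y).

Definition nbhd {V : Type} (E : V -> V -> Prop) (A : V -> Prop) : V -> Prop :=
  fun y => exists x, A x /\ E x y.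

Definition boundary {V : Type} (E : V -> V -> Prop) (A : V -> Prop) : V -> Prop :=
  fun y => nbhd E A y /\ ~ A y.

Definition kappa1_admissible {V : Type} (E : V -> V -> Prop) (X : V -> Prop) : Prop :=
  finite X /\ (exists x, X x) /\ (exists v, ~ nbhd E X v).

(* is_kappa1 E n  <->  kappa_1(Gamma) = n, following the definition:
   the minimum of |boundary X| over admissible X if some admissible X exists,
   otherwise |V| - 1 (V finite, with |V| = n + 1). *)
Definition is_kappa1 {V : Type} (E : V -> V -> Prop) (n : nat) : Prop :=
  ((exists X, kappa1_admissible E X) /\
   (exists X, kappa1_admissible E X /\ has_card (boundary E X) n) /\
   (forall X m, kappa1_admissible E X -> has_card (boundary E X) m -> n <= m))
  \/
  ((~ exists X, kappa1_admissible E X) /\ has_card (fun _ : V => True) (S n)).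

(* Main.v *)
Require Import Defs.
From Stdlib Require Import List Arith Lia ClassicalEpsilon Classical.

Definition dec (P : Prop) : bool := if excluded_middle_informative P then true else false.
Lemma decP (P : Prop) : dec P = true <-> P.
Proof. unfold dec; destruct (excluded_middle_informative P); split; congruence || tauto. Qed.
Lemma decF (P : Prop) : negb (dec P) = true <-> ~ P.
Proof. unfold dec; destruct (excluded_middle_informative P); simpl; split; congruence || tauto. Qed.
Definition eqdec {T : Type} (x y : T) : {x = y} + {x <> y} := excluded_middle_informative (x = y).

Lemma NoDup_firstn {T} (l : list T) n : NoDup l -> NoDup (firstn n l).
Proof. intro H. rewrite <- (firstn_skipn n l) in H. exact (NoDup_app_remove_r _ _ H). Qed.
Lemma In_firstn {T} (l : list T) n x : In x (firstn n l) -> In x l.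
Proof. intro H. rewrite <- (firstn_skipn n l). apply in_or_app; auto. Qed.

Lemma card_down {T} (P : T -> Prop) n m : card_ge P n -> m <= n -> card_ge P m.
Proof.
  intros [l [Hn [Hl Hi]]] Hm. exists (firstn m l). split; [apply NoDup_firstn; auto|].
  split. rewrite length_firstn; lia.
  intros x Hx; apply Hi; eapply In_firstn; eauto.
Qed.

Lemma exact_of_finite {T} (P : T -> Prop) : finite P -> exists l, NoDup l /\ forall x, P x <-> In x l.
Proof.
  intros [l Hl]. exists (nodup eqdec (filter (fun x => dec (P x)) l)). split.
  apply NoDup_nodup. intro x. rewrite nodup_In, filter_In, decP. firstorder.
Qed.


Lemma keep_len {T} (Q : T -> Prop) (l r : list T) : NoDup l ->
  (forall y, In y l -> Q y -> In y r) ->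
  length l <= length (filter (fun y => negb (dec (Q y))) l) + length r.
Proof.
  intros Hl Hr. rewrite <- (filter_length (fun y => dec (Q y)) l).
  assert (length (filter (fun y => dec (Q y)) l) <= length r).
  { apply NoDup_incl_length. { apply NoDup_filter; auto. }
    intros y Hy. apply filter_In in Hy. destruct Hy as [H1 H2]. apply (proj1 (decP (Q y))) in H2. auto. }

  lia.
Qed.

Lemma card_of_list {T} (P : T -> Prop) (l : list T) m : NoDup l -> (forall y, In y l -> P y) ->
  m <= length l -> card_ge P m.
Proof. intros. apply (card_down P (length l)); auto. exists l; auto. Qed.

Definition Nb {U W} (R : U -> W -> Prop) (A : list U) : W -> Prop :=
  fun y => exists x, In x A /\ R x y.

Definition hall_cond {U W} (R : U -> W -> Prop) (L : list U) :=
  forall A, NoDup A -> incl A L -> card_ge (Nb R A) (length A).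

Lemma hall {U W} (w0 : W) n : forall (L : list U) (R : U -> W -> Prop), length L <= n -> NoDup L ->
  hall_cond R L -> exists g : U -> W, (forall x, In x L -> R x (g x)) /\
     (forall x y, In x L -> In y L -> g x = g y -> x = y).
Proof.
  induction n as [|n IH]; intros L R Hlen HL HH.
  { destruct L; [|simpl in Hlen; lia].
    exists (fun _ => w0); simpl; tauto. }
  destruct L as [|x0 L0].
  { exists (fun _ => w0); simpl; tauto. }
  destruct (classic (exists A, NoDup A /\ incl A (x0 :: L0) /\ A <> [] /\
        length A < length (x0 :: L0) /\ ~ card_ge (Nb R A) (S (length A))))
    as [[A [HAn [HAi [HAne [HAl HAc]]]]] | HnB].
  -
    destruct (HH A HAn HAi) as [lA [HlAn [HlAl HlAi]]].
    assert (HlAex : forall y, Nb R A y -> In y lA).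
    { intros y Hy. apply NNPP; intro Hn. apply HAc. exists (y :: lA).
      split; [constructor; auto|]. split; [simpl; lia|].
      intros z [<-|Hz]; auto. }
    destruct (IH A R) as [g1 [Hg1a Hg1b]]; [simpl in HAl, Hlen; lia|auto|..].
    { intros B HBn HBi. apply HH; auto. intros z Hz; auto. }
    set (L2 := filter (fun x => negb (dec (In x A))) (x0 :: L0)).
    assert (HL2A : length L2 + length A <= length (x0 :: L0)).
    { rewrite <- length_app. apply NoDup_incl_length.
      - apply NoDup_app; auto. apply NoDup_filter; auto.
        intros a Ha. unfold L2 in Ha. apply filter_In in Ha. apply decF. tauto.
      - intros a Ha. apply in_app_or in Ha. destruct Ha as [Ha|Ha]; auto.
        unfold L2 in Ha. apply filter_In in Ha. tauto. }
    assert (HA1 : length A <> 0) by (destruct A; simpl; congruence).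
    destruct (IH L2 (fun x y => R x y /\ ~ In y lA)) as [g2 [Hg2a Hg2b]].
    { simpl in HL2A, Hlen |- *. lia. }
    { apply NoDup_filter; auto. }
    { intros B HBn HBi.
      assert (HBA : forall b, In b B -> ~ In b A).
      { intros b Hb. apply HBi in Hb. unfold L2 in Hb. apply filter_In in Hb.
        apply decF. tauto. }
      destruct (HH (A ++ B)) as [l [Hln [Hll Hli]]].
      { apply NoDup_app; auto. intros a Ha Hb. apply (HBA a); auto. }
      { intros a Ha. apply in_app_or in Ha. destruct Ha as [Ha|Ha]; auto.
        apply HBi in Ha. unfold L2 in Ha. apply filter_In in Ha. tauto. }
      pose proof (keep_len (fun y => In y lA) l lA Hln (fun y _ h => h)) as Hk.
      rewrite length_app in Hll.
      apply (card_of_list _ (filter (fun y => negb (dec (In y lA))) l)).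
      - apply NoDup_filter; auto.
      - intros y Hy. apply filter_In in Hy. destruct Hy as [Hy1 Hy2]. apply decF in Hy2.
        destruct (Hli y Hy1) as [x [Hx1 Hx2]]. apply in_app_or in Hx1.
        destruct Hx1 as [Hx1|Hx1].
        + exfalso. apply Hy2. apply HlAex. exists x; auto.
        + exists x; auto.
      - lia. }
    exists (fun x => if excluded_middle_informative (In x A) then g1 x else g2 x).
    split.
    + intros x Hx. destruct (excluded_middle_informative (In x A)) as [h|h]; auto.
      assert (In x L2) by (unfold L2; apply filter_In; split; auto; apply decF; auto).
      apply Hg2a; auto.
    + intros x y Hx Hy.
      assert (HL2 : forall z, In z (x0 :: L0) -> ~ In z A -> In z L2)
        by (intros z Hz1 Hz2; unfold L2; apply filter_In; split; auto; apply decF; auto).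
      destruct (excluded_middle_informative (In x A)) as [hx|hx];
      destruct (excluded_middle_informative (In y A)) as [hy|hy]; intro He.
      * apply Hg1b; auto.
      * exfalso. destruct (Hg2a y (HL2 y Hy hy)) as [_ Hn]. apply Hn. rewrite <- He.
        apply HlAex. exists x; auto.
      * exfalso. destruct (Hg2a x (HL2 x Hx hx)) as [_ Hn]. apply Hn. rewrite He.
        apply HlAex. exists y; auto.
      * apply Hg2b; auto.
  -
    assert (HnB' : forall A, NoDup A -> incl A (x0 :: L0) -> A <> [] ->
        length A < length (x0 :: L0) -> card_ge (Nb R A) (S (length A))).
    { intros A H1 H2 H3 H4. apply NNPP. intro H5. apply HnB. exists A; auto. }
    destruct (HH [x0]) as [l1 [_ [Hl1 Hl1i]]].
    { constructor; auto. constructor. }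
    { intros z [<-|[]]; simpl; auto. }
    destruct l1 as [|y0 l1]; [simpl in Hl1; lia|].
    destruct (Hl1i y0 (or_introl eq_refl)) as [x' [[<-|[]] Hy0]].
    inversion HL as [|? ? Hx0 HL0]; subst.
    destruct (IH L0 (fun x y => R x y /\ y <> y0)) as [g' [Hga Hgb]].
    { simpl in Hlen; lia. }
    { auto. }
    { intros B HBn HBi. destruct B as [|b B'].
      { exists []; simpl; repeat split; auto. constructor. intros ? []. }
      set (B := b :: B') in *.
      assert (HxB : NoDup (x0 :: B)).
      { constructor; [intro h; apply Hx0; auto|auto]. }
      assert (HlB := NoDup_incl_length HxB (l' := x0 :: L0) ltac:(intros z [<-|Hz]; simpl; auto)).
      destruct (HnB' B HBn ltac:(intros z Hz; simpl; auto) ltac:(unfold B; congruence)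
                 ltac:(simpl in HlB |- *; lia)) as [l [Hln [Hll Hli]]].
      pose proof (keep_len (fun y => y = y0) l [y0] Hln ltac:(intros y _ ->; simpl; auto)) as Hk.
      apply (card_of_list _ (filter (fun y => negb (dec (y = y0))) l)).
      - apply NoDup_filter; auto.
      - intros y Hy. apply filter_In in Hy. destruct Hy as [Hy1 Hy2]. apply decF in Hy2.
        destruct (Hli y Hy1) as [x [Hx1 Hx2]]. exists x; auto.
      - simpl in Hk. lia. }
    exists (fun x => if eqdec x x0 then y0 else g' x). split.
    + intros x Hx. destruct (eqdec x x0) as [->|h]; auto.
      destruct Hx as [->|Hx]; [congruence|]. apply Hga; auto.
    + intros x y Hx Hy. destruct (eqdec x x0) as [hx|hx]; destruct (eqdec y x0) as [hy|hy];
        intro He; try congruence.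
      * exfalso. destruct Hy as [->|Hy]; [congruence|]. destruct (Hga y Hy); auto.
      * exfalso. destruct Hx as [->|Hx]; [congruence|]. destruct (Hga x Hx); auto.
      * destruct Hx as [->|Hx]; [congruence|]. destruct Hy as [->|Hy]; [congruence|].
        apply Hgb; auto.
Qed.
Lemma nbhd_fin {V} (E : V -> V -> Prop) (Hlf : locally_finite E) (A : list V) :
  finite (nbhd E (fun z => In z A)).
Proof.
  induction A as [|a A IH].
  - exists []. intros y [x [[] _]].
  - destruct (Hlf a) as [la Hla]. destruct IH as [l Hl]. exists (la ++ l).
    intros y [x [[<-|Hx] Hxy]]; apply in_or_app; [left; auto|right; apply Hl; exists x; auto].
Qed.

Lemma graph_part {V} (E : V -> V -> Prop) (Hlf : locally_finite E) k kap
  (Hkap : is_kappa1 E kap) (Hkk : k <= kap) (X : V -> Prop) (Lx : list V)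
  (HLx : forall x, X x <-> In x Lx) (HLxn : NoDup Lx)
  (HVX : card_ge (fun v => ~ X v) k) (A : list V) :
  NoDup A -> incl A Lx -> A <> [] ->
  card_ge (Nb (fun x y => E x y /\ ~ X y) A) (length A - (length Lx - k)).
Proof.
  intros HAn HAi HAne.
  pose proof (NoDup_incl_length HAn HAi) as HAL.
  destruct (classic (exists v, ~ nbhd E (fun z => In z A) v)) as [Hv|Hv].
  - assert (Had : kappa1_admissible E (fun z => In z A)).
    { split; [exists A; auto|split; auto]. destruct A as [|a A']; [congruence|].
      exists a; simpl; auto. }
    destruct (exact_of_finite (boundary E (fun z => In z A))) as [lb [Hlbn Hlb]].
    { destruct (nbhd_fin E Hlf A) as [l Hl]. exists l. intros x [Hx _]; auto. }
    assert (Hm : kap <= length lb).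
    { destruct Hkap as [[_ [_ Hmin]] | [Hno _]].
      - apply (Hmin _ _ Had). exists lb; auto.
      - exfalso; apply Hno; eauto. }
    pose proof (keep_len (fun y => In y Lx) lb (filter (fun y => dec (In y Lx)) lb) Hlbn
      ltac:(intros y H1 H2; apply filter_In; split; auto; apply decP; auto)) as Hk.
    assert (Hr : length (filter (fun y => dec (In y Lx)) lb) + length A <= length Lx).
    { rewrite <- length_app. apply NoDup_incl_length.
      - apply NoDup_app; auto. apply NoDup_filter; auto.
        intros a Ha Ha2. apply filter_In in Ha. destruct Ha as [Ha _].
        apply Hlb in Ha. destruct Ha as [_ Ha]. auto.
      - intros a Ha. apply in_app_or in Ha. destruct Ha as [Ha|Ha]; auto.
        apply filter_In in Ha. apply (proj1 (decP (In a Lx))). tauto. }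
    apply (card_of_list _ (filter (fun y => negb (dec (In y Lx))) lb)).
    + apply NoDup_filter; auto.
    + intros y Hy. apply filter_In in Hy. destruct Hy as [Hy1 Hy2].
      apply (proj1 (decF (In y Lx))) in Hy2. apply Hlb in Hy1. destruct Hy1 as [[x [Hx1 Hx2]] _].
      exists x. split; auto. split; auto. rewrite HLx. auto.
    + cbv beta in Hk. lia.
  - destruct HVX as [lc [Hlcn [Hlcl Hlci]]].
    apply (card_of_list _ lc); auto.
    + intros y Hy. assert (Hn : nbhd E (fun z => In z A) y) by (apply NNPP; intro; apply Hv; eauto).
      destruct Hn as [x [Hx1 Hx2]]. exists x; auto.
    + lia.
Qed.

Theorem mainTheorem19 (V : Type) (E : V -> V -> Prop)
  (Hrefl : reflexive_graph E) (Hlf : locally_finite E) (Hne : inhabited V)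
  (k : nat) (Hk : exists kap, is_kappa1 E kap /\ k <= kap)
  (X : V -> Prop) (HXfin : finite X)
  (HX : card_ge X k) (HVX : card_ge (fun v => ~ X v) k) :
  exists p : list (V * V),
    length p = k /\ NoDup (map fst p) /\ NoDup (map snd p) /\
    (forall xy, In xy p -> X (fst xy) /\ ~ X (snd xy) /\ E (fst xy) (snd xy)).
Proof.
  destruct Hk as [kap [Hkap Hkk]].
  destruct (exact_of_finite X HXfin) as [Lx [HLxn HLx]].
  assert (HkL : k <= length Lx).
  { destruct HX as [l [H1 [H2 H3]]]. rewrite <- H2. apply NoDup_incl_length; auto.
    intros z Hz; apply HLx; auto. }
  set (d := length Lx - k).
  set (R' := fun x (w : V + nat) => match w with inl y => E x y /\ ~ X y | inr i => i < d end).
  destruct (hall (inr 0) (length Lx) Lx R') as [g [Hga Hgb]]; auto.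
  { intros A HAn HAi. destruct A as [|a A'].
    { exists []. simpl. repeat split; auto. constructor. intros ? []. }
    destruct (graph_part E Hlf k kap Hkap Hkk X Lx HLx HLxn HVX (a :: A') HAn HAi ltac:(congruence))
      as [l [Hln [Hll Hli]]].
    apply (card_of_list _ (map inl l ++ map inr (seq 0 d))).
    - apply NoDup_app.
      + apply NoDup_map_NoDup_ForallPairs; auto. intros u v _ _ h; injection h; auto.
      + apply NoDup_map_NoDup_ForallPairs; [intros u v _ _ h; injection h; auto|apply seq_NoDup].
      + intros w Hw1 Hw2. apply in_map_iff in Hw1, Hw2.
        destruct Hw1 as [? [<- _]]. destruct Hw2 as [? [h _]]. discriminate.
    - intros w Hw. apply in_app_or in Hw. destruct Hw as [Hw|Hw]; apply in_map_iff in Hw.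
      + destruct Hw as [y [<- Hy]]. destruct (Hli y Hy) as [x [Hx1 Hx2]]. exists x; auto.
      + destruct Hw as [i [<- Hi]]. apply in_seq in Hi. exists a. simpl. split; auto. lia.
    - rewrite length_app, !length_map, length_seq. lia. }
  set (isl := fun x => match g x with inl _ => true | inr _ => false end).
  set (Lk := filter isl Lx).
  set (gv := fun x => match g x with inl y => y | inr _ => x end).
  assert (HLk : k <= length Lk).
  { pose proof (filter_length isl Lx) as Hf.
    assert (length (filter (fun x => negb (isl x)) Lx) <= d).
    { set (Lo := filter (fun x => negb (isl x)) Lx).
      set (gi := fun x => match g x with inr i => i | inl _ => 0 end).
      rewrite <- (length_map gi Lo). apply (Nat.le_trans _ (length (seq 0 d))); [|rewrite length_seq; auto].
      apply NoDup_incl_length.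
      - apply NoDup_map_NoDup_ForallPairs; [|apply NoDup_filter; auto].
        intros x y Hx Hy h. unfold Lo in Hx, Hy. apply filter_In in Hx, Hy.
        destruct Hx as [Hx1 Hx2], Hy as [Hy1 Hy2]. apply Hgb; auto.
        unfold gi, isl in *. destruct (g x), (g y); simpl in *; congruence.
      - intros i Hi. apply in_map_iff in Hi. destruct Hi as [x [<- Hx]].
        unfold Lo in Hx. apply filter_In in Hx. destruct Hx as [Hx1 Hx2].
        pose proof (Hga x Hx1) as Hr. unfold gi, isl, R' in *.
        destruct (g x); simpl in *; [discriminate|]. apply in_seq. lia. }
    unfold Lk. lia. }
  exists (firstn k (map (fun x => (x, gv x)) Lk)).
  split; [rewrite length_firstn, length_map; lia|].
  split.
  { rewrite <- firstn_map, map_map. simpl. rewrite map_id. apply NoDup_firstn, NoDup_filter; auto. }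
  split.
  { rewrite <- firstn_map, map_map. simpl. apply NoDup_firstn.
    apply NoDup_map_NoDup_ForallPairs; [|apply NoDup_filter; auto].
    intros x y Hx Hy h. unfold Lk in Hx, Hy. apply filter_In in Hx, Hy.
    destruct Hx as [Hx1 Hx2], Hy as [Hy1 Hy2]. apply Hgb; auto.
    unfold gv, isl in *. destruct (g x), (g y); simpl in *; congruence. }
  intros xy Hxy. apply In_firstn, in_map_iff in Hxy. destruct Hxy as [x [<- Hx]].
  unfold Lk in Hx. apply filter_In in Hx. destruct Hx as [Hx1 Hx2].
  simpl. pose proof (Hga x Hx1) as Hr. unfold gv, isl, R' in *.
  destruct (g x); simpl in *; [|discriminate]. destruct Hr. split; auto. apply HLx; auto.
Qed.
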